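(* Let $\mathcal G$ be a continuous game with players $k\in\{1,\dots,K\}$, action sets $\mathcal Z_k=\mathbb R^{n_k}$ and twice continuously differentiable cost functions $f_k:\mathbb R^n\to\mathbb R$, with gradient operator $F=F_{\mathcal G}$. Suppose $\mathcal G$ is monotone and there are $\ell,\Lambda>0$ with $\|F(z)-F(z')\|\le\ell\|z-z'\|$ and $\|\partial F(z)-\partial F(z')\|_\sigma\le\Lambda\|z-z'\|$ for all $z,z'$. Let $z^{(-1)},z^{(0)}\in\mathbb R^n$ and suppose there is $z^*$ with $F(z^* )=0$, $\|z^*-z^{(-1)}\|\le D$, $\|z^*-z^{(0)}\|\le D$. Let $\eta\le\min\{\frac1{150\ell},\frac1{1711D\Lambda}\}$ and let $z^{(t)}$ be the iterates $z^{(t+1)}=z^{(t)}-2\eta F(z^{(t)})+\eta F(z^{(t-1)})$. For each $k$ let $\mathcal Z_k':=\{w\in\mathbb R^{n_k}:\|w-z_k^{(0)}\|\le 3D\}$ and $\mathcal Z'=\prod_k\mathcal Z_k'$. Then for every integer $T\ge1$, $$\mathrm{Gap}_{\mathcal G}^{\mathcal Z'}(z^{(T)})\le\frac{180KD^2}{\eta\sqrt T}.$$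
   Context: $F_{\mathcal G}(z):=(\nabla_{z_1}f_1(z),\dots,\nabla_{z_K}f_K(z))$; the game is monotone if $\langle F_{\mathcal G}(z')-F_{\mathcal G}(z),z'-z\rangle\ge0$ for all $z,z'$. $\partial F$ is the Jacobian, $\|\cdot\|_\sigma$ the spectral norm, $z_k^{(0)}$ the $k$-th block of $z^{(0)}$. For compact $\mathcal Z_k'\subseteq\mathbb R^{n_k}$, the total gap function is $\mathrm{Gap}_{\mathcal G}^{\mathcal Z'}(z):=\sum_{k=1}^K\big(f_k(z)-\min_{z_k'\in\mathcal Z_k'}f_k(z_k',z_{-k})\big)$, where $z_{-k}$ denotes the actions of the players other than $k$. *)

(* Defs.v *)
From HB Require Import structures.
From mathcomp Require Import all_boot all_order all_algebra.
From mathcomp Require Import all_classical all_reals.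
From mathcomp Require Import topology normedtype derive.
Set Implicit Arguments. Unset Strict Implicit. Unset Printing Implicit Defensive.
Import Order.TTheory GRing.Theory Num.Theory.
Import numFieldNormedType.Exports.
Local Open Scope ring_scope.
Local Open Scope classical_set_scope.

(* Coordinates of R^n, n = n_1 + ... + n_K, indexed by pairs (k, i) with
   k : 'I_K a player and i : 'I_(nk k) a coordinate of player k's action. *)
Definition gcoord (K : nat) (nk : 'I_K -> nat) : finType :=
  {k : 'I_K & 'I_(nk k)}.

Section GameDefs.
Variable R : realType.

Definition enorm (T : finType) (v : T -> R) : R := Num.sqrt (\sum_(c : T) v c ^+ 2).

Variables (K : nat) (nk : 'I_K -> nat).
Local Notation C := (gcoord nk).
Local Notation vec := (C -> R).

Definition pline (g : vec -> R) (c : C) (z : vec) : R -> R :=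
  fun t => g (fun d => z d + t * (d == c)%:R).
Definition has_pderiv (g : vec -> R) (c : C) (z : vec) : Prop :=
  derivable (pline g c z) 0 1.
Definition pderiv (g : vec -> R) (c : C) (z : vec) : R :=
  derive1 (pline g c z) 0.

Definition econt (h : vec -> R) : Prop :=
  forall z (e : R), 0 < e -> exists2 d : R, 0 < d &
    forall z', enorm (fun c => z' c - z c) < d -> `|h z' - h z| < e.

Definition is_C2 (g : vec -> R) : Prop :=
  [/\ forall c z, has_pderiv g c z,
      forall c, econt (pderiv g c),
      forall c d z, has_pderiv (pderiv g c) d z &
      forall c d, econt (pderiv (pderiv g c) d)].

Definition gameF (f : 'I_K -> vec -> R) (z : vec) : vec :=
  fun c => pderiv (f (tag c)) c z.

Definition jacF (f : 'I_K -> vec -> R) (z : vec) : C -> C -> R :=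
  fun c d => pderiv (fun w => gameF f w c) d z.

Definition specnorm (A : C -> C -> R) : R :=
  sup [set enorm (fun c => \sum_(d : C) A c d * v d) | v in [set v : vec | enorm v <= 1]].

Definition monotone_op (F : vec -> vec) : Prop :=
  forall z z', 0 <= \sum_(c : C) (F z' c - F z c) * (z' c - z c).

(* optimistic gradient iterates: (z^(t-1), z^(t)) *)
Fixpoint ogd_pair (F : vec -> vec) (eta : R) (zm1 z0 : vec) (t : nat) : vec * vec :=
  match t with
  | 0 => (zm1, z0)
  | t'.+1 => let: (p, q) := ogd_pair F eta zm1 z0 t' in
             (q, fun c => q c - 2 * eta * F q c + eta * F p c)
  end.
Definition ogd F eta zm1 z0 t : vec := (ogd_pair F eta zm1 z0 t).2.

Definition blk (z : vec) (k : 'I_K) (i : 'I_(nk k)) : R :=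
  z (Tagged (fun k => 'I_(nk k)) i).
Arguments blk : clear implicits.

(* profiles (z'_k, z_{-k}) with z'_k ranging over
   Z'_k = { w in R^(n_k) | ||w - z0_k|| <= r } *)
Definition dev_set (z0 : vec) (r : R) (k : 'I_K) (z : vec) : set vec :=
  [set z' : vec | (forall c : C, tag c != k -> z' c = z c) /\
                  enorm (fun i : 'I_(nk k) => blk z' k i - blk z0 k i) <= r].

(* total gap function w.r.t. Z' = prod_k Z'_k; the min over the compact set
   Z'_k (attained since f_k is continuous) is written as an infimum *)
Definition gap (f : 'I_K -> vec -> R) (z0 : vec) (r : R) (z : vec) : R :=
  \sum_(k < K) (f k z - inf [set f k z' | z' in dev_set z0 r k z]).

End GameDefs.
Arguments blk {R K nk} z k i.

(* Main.v *)
Require Import Defs.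
From HB Require Import structures.
From mathcomp Require Import all_boot all_order all_algebra.
From mathcomp Require Import all_classical all_reals.
From mathcomp Require Import topology normedtype derive.
From mathcomp Require Import ring lra.
Set Implicit Arguments. Unset Strict Implicit. Unset Printing Implicit Defensive.
Import Order.TTheory GRing.Theory Num.Theory.
Import numFieldNormedType.Exports.
Local Open Scope ring_scope.
Local Open Scope classical_set_scope.
Section Vec.
Variable R : realType.
Variable T : finType.
Definition nsq (v : T -> R) : R := \sum_c v c ^+ 2.
Definition ip (u v : T -> R) : R := \sum_c u c * v c.

Lemma nsq_ge0 v : 0 <= nsq v.
Proof. by apply: sumr_ge0 => c _; rewrite sqr_ge0. Qed.

Lemma sum_le (f g : T -> R) : (forall c, f c <= g c) -> \sum_c f c <= \sum_c g c.
Proof. by move=> H; apply: ler_sum => c _. Qed.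

Lemma sum_lin2 (a b : R) (f g : T -> R) :
  a * \sum_c f c + b * \sum_c g c = \sum_c (a * f c + b * g c).
Proof. by rewrite big_split /= !mulr_sumr. Qed.

Lemma sum_lin3 (a b d : R) (f g h : T -> R) :
  a * \sum_c f c + b * \sum_c g c + d * \sum_c h c = \sum_c (a * f c + b * g c + d * h c).
Proof. by rewrite !big_split /= !mulr_sumr. Qed.

Lemma enorm_sq v : enorm v = Num.sqrt (nsq v).
Proof. by []. Qed.

Lemma enorm_le_sq (u v : T -> R) (l : R) : 0 <= l ->
  enorm u <= l * enorm v -> nsq u <= l ^+ 2 * nsq v.
Proof.
move=> l0; rewrite !enorm_sq => H.
have h1 := sqrtr_ge0 (nsq u). have h2 := sqrtr_ge0 (nsq v).
rewrite -(sqr_sqrtr (nsq_ge0 u)) -(sqr_sqrtr (nsq_ge0 v)).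
have := mulr_ge0 l0 h2. nra.
Qed.

Lemma enorm_le_sq1 (u : T -> R) (l : R) : 0 <= l ->
  enorm u <= l -> nsq u <= l ^+ 2.
Proof.
move=> l0; rewrite !enorm_sq => H.
have h1 := sqrtr_ge0 (nsq u).
rewrite -(sqr_sqrtr (nsq_ge0 u)).
nra.
Qed.
End Vec.
Section SumLemmas.
Variable R : realType.
Variable T : finType.
Lemma sum_eq3 (f g h k : T -> R) (a b d : R) :
  (forall c, f c = a * g c + b * h c + d * k c) ->
  \sum_c f c = a * \sum_c g c + b * \sum_c h c + d * \sum_c k c.
Proof. by move=> H; rewrite (eq_bigr _ (fun c _ => H c)) !big_split /= !mulr_sumr. Qed.
Lemma sum_eq4 (f g h k m : T -> R) (a b d e : R) :
  (forall c, f c = a * g c + b * h c + d * k c + e * m c) ->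
  \sum_c f c = a * \sum_c g c + b * \sum_c h c + d * \sum_c k c + e * \sum_c m c.
Proof. by move=> H; rewrite (eq_bigr _ (fun c _ => H c)) !big_split /= !mulr_sumr. Qed.
Lemma sum_le1 (f g : T -> R) (a : R) :
  (forall c, f c <= a * g c) -> \sum_c f c <= a * \sum_c g c.
Proof. by move=> H; rewrite mulr_sumr; apply: ler_sum => c _. Qed.
Lemma sum_le2 (f g h : T -> R) (a b : R) :
  (forall c, f c <= a * g c + b * h c) ->
  \sum_c f c <= a * \sum_c g c + b * \sum_c h c.
Proof. by move=> H; rewrite !mulr_sumr -big_split; apply: ler_sum => c _. Qed.
Lemma sum_le3 (f g h k : T -> R) (a b d : R) :
  (forall c, f c <= a * g c + b * h c + d * k c) ->
  \sum_c f c <= a * \sum_c g c + b * \sum_c h c + d * \sum_c k c.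
Proof. by move=> H; rewrite !mulr_sumr -!big_split; apply: ler_sum => c _. Qed.
End SumLemmas.

Section OG.
Variables (R : realType) (K : nat) (nk : 'I_K -> nat).
Local Notation C := (gcoord nk).
Local Notation vec := (C -> R).
Variables (F : vec -> vec) (ell eta D : R) (zm1 z0 zs : vec).
Hypothesis mono : monotone_op F.
Hypothesis lip : forall z z', nsq (fun c => F z c - F z' c) <= ell ^+ 2 * nsq (fun c => z c - z' c).
Hypothesis Fzs : forall c, F zs c = 0.
Hypothesis eta0 : 0 < eta.
Hypothesis ell0 : 0 < ell.
Hypothesis small : eta * ell <= 1/150.
Hypothesis hD1 : nsq (fun c => zs c - zm1 c) <= D ^+ 2.
Hypothesis hD0 : nsq (fun c => zs c - z0 c) <= D ^+ 2.

Definition q := eta ^+ 2 * ell ^+ 2.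
Lemma q0 : 0 <= q. Proof. by rewrite /q mulr_ge0 // sqr_ge0. Qed.
Lemma q1 : q <= 1/22500.
Proof.
rewrite /q -exprMn; have h : 0 <= eta * ell by rewrite mulr_ge0 // ltW.
have h2 := ler_pM h h small small. rewrite expr2; lra.
Qed.

Definition zz n := match n with 0 => zm1 | m.+1 => ogd F eta zm1 z0 m end.
Lemma ogd_pairE t : ogd_pair F eta zm1 z0 t = (zz t, zz t.+1).
Proof. by elim: t => [|t IH] //=; rewrite IH /ogd /= IH. Qed.
Lemma zz_rec n : zz n.+2 = fun c => zz n.+1 c - 2 * eta * F (zz n.+1) c + eta * F (zz n) c.
Proof. by rewrite /= /ogd /= ogd_pairE. Qed.

Definition G n := F (zz n).
Definition ww n : vec := fun c => zz n.+1 c + eta * G n c.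
Definition A n := F (ww n).
Definition a n := nsq (fun c => ww n c - zs c).

Lemma lipq z z' : eta ^+ 2 * nsq (fun c => F z c - F z' c) <= q * nsq (fun c => z c - z' c).
Proof.
rewrite /q -mulrA; apply: ler_wpM2l; first exact: sqr_ge0.
exact: lip.
Qed.

Lemma L4 n : a n.+1 <= a n + eta ^+ 2 * nsq (fun c => G n.+1 c - G n c)
                         - eta ^+ 2 * nsq (G n).
Proof.
have hm := mono zs (zz n.+1).
have E : a n.+1 = 1 * a n + eta ^+ 2 * nsq (fun c => G n.+1 c - G n c)
         + (- eta ^+ 2) * nsq (G n)
         + (- 2 * eta) * \sum_c (F (zz n.+1) c - F zs c) * (zz n.+1 c - zs c).
  rewrite /a /nsq; apply: sum_eq4 => c.
  rewrite /ww zz_rec Fzs /G; ring.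
rewrite E; have : 0 <= eta * \sum_c (F (zz n.+1) c - F zs c) * (zz n.+1 c - zs c).
  by rewrite mulr_ge0 // ltW.
lra.
Qed.

Lemma L5 m : nsq (fun c => G m.+2 c - G m.+1 c) <= q * (8 * nsq (G m.+1) + 2 * nsq (G m)).
Proof.
apply: le_trans (lip _ _) _.
have h : nsq (fun c => zz m.+2 c - zz m.+1 c) <= eta ^+ 2 * 8 * nsq (G m.+1) + eta ^+ 2 * 2 * nsq (G m).
  apply: sum_le2 => c; rewrite zz_rec /G.
  set x := F (zz m.+1) c; set y := F (zz m) c.
  have := sqr_ge0 (eta * (2 * x + y)); nra.
have e2 : 0 <= ell ^+ 2 by exact: sqr_ge0.
apply: le_trans (ler_wpM2l e2 h) _; rewrite /q; lra.
Qed.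

Definition E m := a m.+1 + 2 * q * eta ^+ 2 * nsq (G m).

Lemma E_ge0 m : 0 <= E m.
Proof.
apply: addr_ge0; first exact: nsq_ge0.
apply: mulr_ge0; last exact: nsq_ge0.
apply: mulr_ge0; last exact: sqr_ge0.
by apply: mulr_ge0 => //; exact: q0.
Qed.

Lemma L_E m : E m.+1 <= E m - (1/2) * eta ^+ 2 * nsq (G m.+1).
Proof.
rewrite /E; have h4 := L4 m.+1; have h5 := L5 m.
have hq := q0; have hq1 := q1.
have g1 := nsq_ge0 (G m.+1); have g0 := nsq_ge0 (G m).
have e2 : 0 <= eta ^+ 2 by exact: sqr_ge0.
have h5' := ler_wpM2l e2 h5.
have -> : 2 * q * eta ^+ 2 * nsq (G m.+1) = 2 * (q * (eta ^+ 2 * nsq (G m.+1))) by ring.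
have -> : 2 * q * eta ^+ 2 * nsq (G m) = 2 * (q * (eta ^+ 2 * nsq (G m))) by ring.
have -> : 1/2 * eta ^+ 2 * nsq (G m.+1) = 1/2 * (eta ^+ 2 * nsq (G m.+1)) by ring.
have e5 : eta ^+ 2 * (q * (8 * nsq (G m.+1) + 2 * nsq (G m))) = 8 * (q * (eta ^+ 2 * nsq (G m.+1))) + 2 * (q * (eta ^+ 2 * nsq (G m))) by ring.
rewrite e5 in h5'.
set X := eta ^+ 2 * nsq (G m.+1).
have hX : 0 <= X by rewrite mulr_ge0.
have hqX : q * X <= 1/20 * X.
  by apply: ler_wpM2r => //; lra.
move: h4 h5' hqX; rewrite -/X.
set Y := eta ^+ 2 * nsq _. set QX := q * X. set QZ := q * _.
lra.
Qed.

Definition Phi n := nsq (A n) + nsq (fun c => A n c - G n c).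

Lemma Phi_ge0 n : 0 <= Phi n.
Proof. by rewrite addr_ge0 ?nsq_ge0. Qed.

Lemma L6 n : Phi n.+1 <= Phi n.
Proof.
have hm := mono (ww n) (ww n.+1).
set I := \sum_c (A n c - A n.+1 c) * G n.+1 c.
have hI : 0 <= eta * I.
  apply: le_trans hm _; rewrite le_eqVlt; apply/orP; left; apply/eqP.
  rewrite /I mulr_sumr; apply: eq_bigr => c _; rewrite /A /ww zz_rec /G; ring.
have hI0 : 0 <= I by move: hI; rewrite pmulr_rge0.
have hw : nsq (fun c => ww n.+1 c - zz n.+1 c) = eta ^+ 2 * nsq (fun c => G n c - G n.+1 c).
  rewrite /nsq mulr_sumr; apply: eq_bigr => c _; rewrite /ww zz_rec /G; ring.
have hl : nsq (fun c => A n.+1 c - G n.+1 c) <= q * nsq (fun c => G n c - G n.+1 c).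
  have := lip (ww n.+1) (zz n.+1); rewrite hw => h; apply: le_trans h _.
  by rewrite /q mulrA [ell ^+ 2 * _]mulrC.
have hub : nsq (fun c => G n c - G n.+1 c) <= 2 * nsq (fun c => A n c - G n c) + 2 * nsq (fun c => A n c - G n.+1 c).
  apply: sum_le2 => c; set x := A n c; set u := G n c; set b := G n.+1 c.
  have := sqr_ge0 (x - u + (x - b)); nra.
have hid : nsq (A n) = 1 * nsq (A n.+1) + 2 * I + 1 * nsq (fun c => A n c - G n.+1 c) + (-1) * nsq (fun c => A n.+1 c - G n.+1 c).
  by rewrite /I /nsq; apply: sum_eq4 => c; ring.
rewrite /Phi.
have hq := q0; have hq1 := q1.
move: hub hl hid.
set U0 := nsq (fun c => G n c - G n.+1 c).
set Q0 := nsq (fun c => A n c - G n c).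
set S := nsq (fun c => A n c - G n.+1 c).
set Q1 := nsq (fun c => A n.+1 c - G n.+1 c).
move=> hub hl hid.
have hub' : q * U0 <= 2 * (q * Q0) + 2 * (q * S).
  have := ler_wpM2l hq hub; rewrite mulrDr.
  by rewrite !mulrA ![q * 2]mulrC -!mulrA.
have hQ0 : q * Q0 <= 1/4 * Q0.
  by apply: ler_wpM2r; [exact: nsq_ge0| lra].
have hS : q * S <= 1/4 * S.
  by apply: ler_wpM2r; [exact: nsq_ge0| lra].
move: hub' hQ0 hS hl hid.
set X1 := q * U0. set X2 := q * Q0. set X3 := q * S.
lra.
Qed.

Lemma lipA n : nsq (fun c => A n c - G n.+1 c) <= q * nsq (G n).
Proof.
have hw : nsq (fun c => ww n c - zz n.+1 c) = eta ^+ 2 * nsq (G n).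
  rewrite /nsq mulr_sumr; apply: eq_bigr => c _; rewrite /ww; ring.
have := lip (ww n) (zz n.+1); rewrite hw => h; apply: le_trans h _.
by rewrite /q mulrA [ell ^+ 2 * _]mulrC.
Qed.

Lemma L7 n : Phi n <= 6 * (nsq (G n.+1) + nsq (G n)).
Proof.
have h : Phi n <= 6 * nsq (G n.+1) + 6 * nsq (fun c => A n c - G n.+1 c) + 2 * nsq (G n).
  rewrite /Phi /nsq -big_split /=; apply: sum_le3 => c.
  set x := A n c; set u := G n c; set b := G n.+1 c.
  have := sqr_ge0 (x + u); have := sqr_ge0 (x - b - b); nra.
have := lipA n; have := q1; have := nsq_ge0 (G n).
move: h; set S := nsq (fun c => A n c - G n.+1 c); set g0 := nsq (G n) => h h0 hq hA.
have : q * g0 <= 1/6 * g0 by apply: ler_wpM2r => //; lra.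
move: hA; set X := q * g0; lra.
Qed.

Lemma L8 n : nsq (G n.+1) <= 3 * Phi n.
Proof.
have h1 : nsq (G n.+1) <= 2 * nsq (A n) + 2 * nsq (fun c => A n c - G n.+1 c).
  apply: sum_le2 => c; have := sqr_ge0 (A n c + (A n c - G n.+1 c)) ; nra.
have h2 : nsq (G n) <= 2 * nsq (A n) + 2 * nsq (fun c => A n c - G n c).
  apply: sum_le2 => c; have := sqr_ge0 (A n c + (A n c - G n c)) ; nra.
have h3 := lipA n.
have hq := q0; have hq1 := q1.
have h4 : q * nsq (G n) <= 1/4 * nsq (G n) by apply: ler_wpM2r; [exact: nsq_ge0|lra].
move: h1 h2 h3 h4; rewrite /Phi; set X := q * nsq (G n).
have := nsq_ge0 (A n); have := nsq_ge0 (fun c => A n c - G n c).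
lra.
Qed.

Definition M m := E m.+1 + E m.
Definition H m := eta ^+ 2 * (m.+1)%:R * Phi m.+1 + 12 * M m.

Lemma L_H m : H m.+1 <= H m.
Proof.
rewrite /H /M.
have e1 := L_E m.+1; have e2 := L_E m; have p7 := L7 m.+1; have p6 := L6 m.+1.
have hp := Phi_ge0 m.+1.
have he : 0 <= eta ^+ 2 by exact: sqr_ge0.
have k1 : eta ^+ 2 * (m.+2)%:R * Phi m.+2 <= eta ^+ 2 * (m.+1)%:R * Phi m.+1 + eta ^+ 2 * Phi m.+1.
  rewrite -mulrA; apply: le_trans (ler_wpM2l he (ler_wpM2l (ler0n _ _) p6)) _.
  have -> : ((m.+2)%:R : R) = (m.+1)%:R + 1 by rewrite mulrSr.
  by rewrite le_eqVlt; apply/orP; left; apply/eqP; ring.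
have k2 : eta ^+ 2 * Phi m.+1 <= 6 * (eta ^+ 2 * nsq (G m.+2)) + 6 * (eta ^+ 2 * nsq (G m.+1)).
  apply: le_trans (ler_wpM2l he p7) _.
  by rewrite le_eqVlt; apply/orP; left; apply/eqP; ring.
have e1' : E m.+2 <= E m.+1 - 1/2 * (eta ^+ 2 * nsq (G m.+2)).
  by apply: le_trans e1 _; rewrite le_eqVlt; apply/orP; left; apply/eqP; ring.
have e2' : E m.+1 <= E m - 1/2 * (eta ^+ 2 * nsq (G m.+1)).
  by apply: le_trans e2 _; rewrite le_eqVlt; apply/orP; left; apply/eqP; ring.
move: k1 k2 e1' e2'.
set P1 := eta ^+ 2 * Phi m.+1.
set Y1 := eta ^+ 2 * (m.+1)%:R * Phi m.+1.
set Y2 := eta ^+ 2 * (m.+2)%:R * Phi m.+2.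
set g2 := eta ^+ 2 * nsq (G m.+2).
set g1 := eta ^+ 2 * nsq (G m.+1).
lra.
Qed.

Lemma H_le m : H m <= H 0.
Proof. elim: m => [|m IH]; first exact: lexx. exact: le_trans (L_H m) IH. Qed.

Lemma E_le m : E m <= E 0.
Proof.
elim: m => [|m IH]; first exact: lexx. apply: le_trans (L_E m) _; apply: le_trans IH.
have : 0 <= 1/2 * eta ^+ 2 * nsq (G m.+1).
  apply: mulr_ge0; [apply: mulr_ge0; [lra| exact: sqr_ge0] | exact: nsq_ge0].
lra.
Qed.

Lemma nsq_sym (u v : vec) : nsq (fun c => u c - v c) = nsq (fun c => v c - u c).
Proof. by apply: eq_bigr => c _; rewrite -sqrrN opprB. Qed.

Lemma G_lip n : eta ^+ 2 * nsq (G n) <= q * nsq (fun c => zz n c - zs c).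
Proof.
have -> : nsq (G n) = nsq (fun c => F (zz n) c - F zs c).
  by apply: eq_bigr => c _; rewrite Fzs subr0.
exact: lipq.
Qed.

Lemma zz1 : zz 1 = z0. Proof. by []. Qed.
Lemma zz0 : zz 0 = zm1. Proof. by []. Qed.

Lemma qD : q * D ^+ 2 <= 1/22500 * D ^+ 2.
Proof. by apply: ler_wpM2r; [exact: sqr_ge0| exact: q1]. Qed.

Lemma E0_bound : E 0 <= 2 * D ^+ 2 + 6 * (q * D ^+ 2).
Proof.
have h4 := L4 0.
have hl := lipq (zz 1) (zz 0).
have hz : nsq (fun c => zz 1 c - zz 0 c) <= 2 * nsq (fun c => zs c - z0 c) + 2 * nsq (fun c => zs c - zm1 c).
  apply: sum_le2 => c; rewrite zz1 zz0; have := sqr_ge0 (zs c - z0 c + (zs c - zm1 c)); nra.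
have ha : a 0 <= 2 * nsq (fun c => zs c - z0 c) + 2 * (eta ^+ 2 * nsq (fun c => F zm1 c - F zs c)).
  rewrite mulrA; apply: sum_le2 => c; rewrite /ww /G zz1 zz0 Fzs.
  have := sqr_ge0 (zs c - z0 c + eta * (F zm1 c - 0)); nra.
have hl2 := lipq zm1 zs; rewrite [X in _ <= q * X]nsq_sym in hl2.
have hq := q0.
have k1 : q * nsq (fun c => zz 1 c - zz 0 c) <= 2 * (q * nsq (fun c => zs c - z0 c)) + 2 * (q * nsq (fun c => zs c - zm1 c)).
  by apply: le_trans (ler_wpM2l hq hz) _; rewrite le_eqVlt; apply/orP; left; apply/eqP; ring.
have k2 := ler_wpM2l hq hD1.
have k3 := ler_wpM2l hq hD0.
have g0 : 0 <= eta ^+ 2 * nsq (G 0) by rewrite mulr_ge0 ?nsq_ge0 ?sqr_ge0.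
have k4 : q * (eta ^+ 2 * nsq (G 0)) <= 1/2 * (eta ^+ 2 * nsq (G 0)).
  by apply: ler_wpM2r => //; have := q1; lra.
rewrite /E.
have -> : 2 * q * eta ^+ 2 * nsq (G 0) = 2 * (q * (eta ^+ 2 * nsq (G 0))) by ring.
move: h4 hl ha hl2 k1 k2 k3 k4 g0 hD0 hD1.
rewrite zz1 zz0.
set X1 := q * nsq (fun c => zs c - z0 c).
set X2 := q * nsq (fun c => zs c - zm1 c).
set X3 := q * (eta ^+ 2 * nsq (G 0)).
set X4 := eta ^+ 2 * nsq (G 0).
set X5 := q * D ^+ 2.
set X6 := eta ^+ 2 * nsq (fun c => F zm1 c - F zs c).
set X7 := eta ^+ 2 * nsq (fun c => G 1 c - G 0 c).
lra.
Qed.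

Lemma Phi1_bound : eta ^+ 2 * Phi 1 <= D ^+ 2.
Proof.
have p7 := L7 1.
have gl0 := G_lip 0; have gl1 := G_lip 1; have gl2 := G_lip 2.
rewrite zz0 nsq_sym in gl0; rewrite zz1 nsq_sym in gl1.
have hq := q0; have hqD := qD.
have hz2 : nsq (fun c => zz 2 c - zs c) <= 3 * nsq (fun c => zz 1 c - zs c) + 12 * (eta ^+ 2 * nsq (G 1)) + 3 * (eta ^+ 2 * nsq (G 0)).
  rewrite !mulrA; apply: sum_le3 => c; rewrite zz_rec /G.
  set x := zz 1 c - zs c; set u := F (zz 1) c; set v := F (zz 0) c.
  have -> : zz 1 c - 2 * eta * u + eta * v - zs c = x - 2 * eta * u + eta * v by rewrite /x; ring.
  have := sqr_ge0 (x + 2 * eta * u); have := sqr_ge0 (x - eta * v); have := sqr_ge0 (2 * eta * u + eta * v).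
  nra.
rewrite zz1 [X in _ <= 3 * X + _ + _]nsq_sym in hz2.
have k0 := ler_wpM2l hq hD1; have k1 := ler_wpM2l hq hD0.
have hb2 : nsq (fun c => zz 2 c - zs c) <= 4 * D ^+ 2.
  move: hz2 gl0 gl1 k0 k1 hqD hD0; set X := q * D ^+ 2.
  set Y1 := eta ^+ 2 * nsq (G 1); set Y0 := eta ^+ 2 * nsq (G 0).
  set Z0 := q * nsq _; set Z1 := q * nsq _.
  have := sqr_ge0 D. lra.
have k2 := ler_wpM2l hq hb2.
have k3 : q * (4 * D ^+ 2) = 4 * (q * D ^+ 2) by ring.
have e2 : 0 <= eta ^+ 2 by exact: sqr_ge0.
have k4 : eta ^+ 2 * Phi 1 <= 6 * (eta ^+ 2 * nsq (G 2)) + 6 * (eta ^+ 2 * nsq (G 1)).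
  by apply: le_trans (ler_wpM2l e2 p7) _; rewrite le_eqVlt; apply/orP; left; apply/eqP; ring.
move: k4 k3 k2 gl2 gl1 k1 hqD; rewrite -/(G 1).
set X := q * D ^+ 2.
set Y1 := eta ^+ 2 * nsq (G 1); set Y2 := eta ^+ 2 * nsq (G 2).
set Z2 := q * nsq (fun c => zz 2 c - zs c); set Z1 := q * nsq _.
have := sqr_ge0 D. lra.
Qed.

Lemma H0_bound : H 0 <= 50 * D ^+ 2.
Proof.
rewrite /H /M; have h1 := Phi1_bound; have h2 := E0_bound; have h3 := L_E 0.
have h4 : 0 <= 1 / 2 * eta ^+ 2 * nsq (G 1).
  apply: mulr_ge0; [apply: mulr_ge0; [lra| exact: sqr_ge0] | exact: nsq_ge0].
have hqD := qD.
have -> : eta ^+ 2 * 1%:R * Phi 1 = eta ^+ 2 * Phi 1 by ring.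
move: h1 h2 h3 h4 hqD; set X := q * D ^+ 2; set P := eta ^+ 2 * Phi 1.
set Y := 1 / 2 * _.
have := sqr_ge0 D; lra.
Qed.

Lemma OG_F m : eta ^+ 2 * (m.+1)%:R * nsq (G m.+2) <= 150 * D ^+ 2.
Proof.
have h1 := H_le m; have h2 := H0_bound; have h3 := L8 m.+1.
have hM : 0 <= M m by rewrite /M addr_ge0 ?E_ge0.
have e : 0 <= eta ^+ 2 * (m.+1)%:R by rewrite mulr_ge0 ?sqr_ge0 ?ler0n.
have h4 := ler_wpM2l e h3.
have h4' : eta ^+ 2 * (m.+1)%:R * nsq (G m.+2) <= 3 * (eta ^+ 2 * (m.+1)%:R * Phi m.+1).
  by apply: le_trans h4 _; rewrite le_eqVlt; apply/orP; left; apply/eqP; ring.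
move: h1 h2 h4' hM; rewrite /H.
set P := eta ^+ 2 * (m.+1)%:R * Phi m.+1.
lra.
Qed.

Lemma OG_z m : nsq (fun c => zz m.+2 c - zs c) <= 13 * D ^+ 2.
Proof.
have h1 : nsq (fun c => zz m.+2 c - zs c) <= 2 * a m.+1 + 2 * (eta ^+ 2 * nsq (G m.+1)).
  rewrite mulrA; apply: sum_le2 => c; rewrite /ww.
  set x := zz m.+2 c - zs c; set y := G m.+1 c.
  have -> : zz m.+2 c + eta * G m.+1 c - zs c = x + eta * y by rewrite /x /y; ring.
  have := sqr_ge0 (x + 2 * eta * y); nra.
have h2 := L_E m; have h3 := E_le m; have h4 := E_ge0 m.+1; have h5 := E0_bound.
have h6 : a m.+1 <= E m.
  rewrite /E; have : 0 <= 2 * q * eta ^+ 2 * nsq (G m).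
    by apply: mulr_ge0; [apply: mulr_ge0; [apply: mulr_ge0 => //; exact: q0|exact: sqr_ge0]|exact: nsq_ge0].
  lra.
have hqD := qD.
have h2' : E m.+1 <= E m - 1/2 * (eta ^+ 2 * nsq (G m.+1)).
  by apply: le_trans h2 _; rewrite le_eqVlt; apply/orP; left; apply/eqP; ring.
clear h2.
move: h1 h2' h3 h4 h5 h6 hqD; set X := q * D ^+ 2; set Y := eta ^+ 2 * nsq (G m.+1).
have := sqr_ge0 D; lra.
Qed.

End OG.

Section Calc.
Variables (R : realType) (K : nat) (nk : 'I_K -> nat).
Local Notation C := (gcoord nk).
Local Notation vec := (C -> R).

Definition sh (y : vec) (c0 : C) (u : R) : vec := fun c => y c + u * (c == c0)%:R.

Lemma pline_deriv (g : vec -> R) c0 y u :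
  has_pderiv g c0 (sh y c0 u) ->
  is_derive u 1 (pline g c0 y) (pderiv g c0 (sh y c0 u)).
Proof.
move=> hd.
have key : (fun h : R => h^-1 *: ((pline g c0 y \o shift u) (h *: 1) - pline g c0 y u)) =
           (fun h : R => h^-1 *: ((pline g c0 (sh y c0 u) \o shift 0) (h *: 1) - pline g c0 (sh y c0 u) 0)).
  apply/funext => h /=; rewrite /pline /sh /=.
  congr (_ *: (_ - _)); congr g; apply/funext => c /=; rewrite /GRing.scale /=; ring.
apply: DeriveDef.
  by rewrite /derivable key; exact: hd.
by rewrite /derive key /pderiv derive1E /derive.
Qed.

Lemma mvt1 (phi dphi : R -> R) :
  (forall x : R, is_derive x (1:R) phi (dphi x)) ->
  forall t, exists xi, `|xi| <= `|t| /\ phi t - phi 0 = t * dphi xi.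
Proof.
move=> hd t.
have hc : forall a b : R, {within `[a, b], continuous phi}.
  move=> a b; apply: derivable_within_continuous => x _.
  by have [] := hd x.
have [t0|t0] := leP 0 t.
  have [c hc1 hc2] := MVT_segment t0 (fun x _ => hd x) (hc 0 t).
  exists c; split; last by rewrite hc2 subr0 mulrC.
  move: hc1; rewrite in_itv /= => /andP [h1 h2].
  by rewrite !ger0_norm // (le_trans h1 h2).
have t0' : t <= 0 by exact: ltW.
have [c hc1 hc2] := MVT_segment t0' (fun x _ => hd x) (hc t 0).
exists c; split.
  move: hc1; rewrite in_itv /= => /andP [h1 h2].
  by rewrite !ler0_norm // ?lerN2 //; exact: ltW.
have -> : phi t - phi 0 = - (phi 0 - phi t) by ring.
by rewrite hc2; ring.
Qed.

End Calc.

Section Calc2.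
Variables (R : realType) (K : nat) (nk : 'I_K -> nat).
Local Notation C := (gcoord nk).
Local Notation vec := (C -> R).

Definition Pt (x d : vec) (h : R) (j : nat) : vec :=
  fun c => x c + h * ((enum_rank c < j)%N)%:R * d c.

Lemma Pt0 x d h : Pt x d h 0 = x.
Proof. by apply/funext => c; rewrite /Pt ltn0 mulr0 mul0r addr0. Qed.

Lemma PtN x d h : Pt x d h #|C| = fun c => x c + h * d c.
Proof. by apply/funext => c; rewrite /Pt ltn_ord mulr1. Qed.

Lemma PtS x d h (j : 'I_#|C|) :
  Pt x d h j.+1 = sh (Pt x d h j) (enum_val j) (h * d (enum_val j)).
Proof.
apply/funext => c; rewrite /Pt /sh ltnS leq_eqVlt.
have [e|ne] := eqVneq c (enum_val j).
  by rewrite e enum_valK !eqxx /= ltnn /=; ring.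
have -> : (nat_of_ord (enum_rank c) == nat_of_ord j) = false.
  apply/negbTE; apply: contra ne => /eqP /ord_inj <-; by rewrite enum_rankK.
by rewrite /= ?(negbTE ne) /=; ring.
Qed.

Lemma sq_le_abs (a b : R) : `|a| <= `|b| -> a ^+ 2 <= b ^+ 2.
Proof.
move=> h; rewrite -(real_normK (num_real a)) -(real_normK (num_real b)).
have := normr_ge0 a; nra.
Qed.

Lemma dir_deriv (g : vec -> R) (x d : vec) :
  (forall c z, has_pderiv g c z) -> (forall c, econt (pderiv g c)) ->
  (fun h : R => h^-1 *: (g (fun c => x c + h * d c) - g x)) @ 0^' -->
    \sum_c pderiv g c x * d c.
Proof.
move=> hd hc; apply/cvgrPdist_lt => eps eps0.
set N := \sum_c `|d c|.
have N0 : 0 <= N by apply: sumr_ge0 => c _.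
set eps' := eps / (N + 1).
have eps'0 : 0 < eps' by rewrite divr_gt0 // ltr_wpDl.
set M := nsq d.
have M0 : 0 <= M := nsq_ge0 d.
have near_c : forall c : C, \forall h \near (0 : R),
    forall y : vec, nsq (fun c' => y c' - x c') <= 4 * h ^+ 2 * M ->
      `|pderiv g c y - pderiv g c x| < eps'.
  move=> c; have [del del0 Hdel] := hc c x eps' eps'0.
  have e0 : 0 < del / (2 * M + 2) by rewrite divr_gt0 // ltr_wpDl // mulr_ge0.
  apply: filterS (nbhs0_lt e0) => h hh y hy.
  apply: Hdel; rewrite /enorm.
  have hlt : nsq (fun c' => y c' - x c') < del ^+ 2.
    apply: le_lt_trans hy _.
    have : `|h| * (2 * M + 2) < del by rewrite -ltr_pdivlMr // ltr_wpDl // mulr_ge0.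
    rewrite -(real_normK (num_real h)).
    have ha := normr_ge0 h; move: (`|h|) ha => a ha hlt.
    have h1 : (a * (2 * M + 2)) ^+ 2 < del ^+ 2.
      rewrite ltr_pXn2r // ?nnegrE ?mulr_ge0 ?addr_ge0 ?mulr_ge0 //; exact: ltW.
    have e : (a * (2 * M + 2)) ^+ 2 = 4 * a ^+ 2 * M + a ^+ 2 * (4 * M ^+ 2 + 4 * M + 4) by ring.
    have t0 : 0 <= a ^+ 2 * (4 * M ^+ 2 + 4 * M + 4).
      by rewrite mulr_ge0 ?sqr_ge0 // !addr_ge0 ?mulr_ge0 ?sqr_ge0.
    move: h1 t0; rewrite e; lra.
  move: hlt; rewrite -ltr_sqrt ?exprn_gt0 // sqrtr_sqr gtr0_norm //.
have H := @filter_forall _ _ _ _ _ near_c.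
near=> h.
have hneq0 : h != 0 by near: h; exact: nbhs_dnbhs_neq.
have Hh : forall (i : C) (y : C -> R),
      nsq (fun c' : C => y c' - x c') <= 4 * h ^+ 2 * M ->
      `|pderiv g i y - pderiv g i x| < eps'.
  near: h. by apply: cvg_within; exact: H.
have tele : g (fun c => x c + h * d c) - g x =
    \sum_(j < #|C|) (g (Pt x d h j.+1) - g (Pt x d h j)).
  rewrite -(big_mkord xpredT (fun j => g (Pt x d h j.+1) - g (Pt x d h j))).
  by rewrite telescope_sumr // PtN Pt0.
have reidx : \sum_c pderiv g c x * d c = \sum_(j < #|C|) pderiv g (enum_val j) x * d (enum_val j).
  by rewrite (reindex (fun j : 'I_#|C| => enum_val j) (onW_bij _ (@enum_val_bij C))).
have reidxN : N = \sum_(j < #|C|) `|d (enum_val j)|.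
  by rewrite /N (reindex (fun j : 'I_#|C| => enum_val j) (onW_bij _ (@enum_val_bij C))).
rewrite tele reidx /GRing.scale /= mulr_sumr -sumrB.
apply: le_lt_trans (ler_norm_sum _ _ _) _.
apply: (@le_lt_trans _ _ (\sum_(j < #|C|) `|d (enum_val j)| * eps')).
  apply: ler_sum => j _.
  set cj := enum_val j.
  have [xi [hxi hmv]] := mvt1 (fun u => pline_deriv (hd cj (sh (Pt x d h j) cj u))) (h * d cj).
  have E1 : g (Pt x d h j.+1) - g (Pt x d h j) =
      pline g cj (Pt x d h j) (h * d cj) - pline g cj (Pt x d h j) 0.
    rewrite /pline PtS; congr (g _ - g _).
    by apply/funext => c; rewrite mul0r addr0.
  rewrite E1 hmv.
  have -> : h^-1 * (h * d cj * pderiv g cj (sh (Pt x d h j) cj xi)) =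
            d cj * pderiv g cj (sh (Pt x d h j) cj xi).
    by rewrite mulrA mulrA mulVf // mul1r.
  rewrite [pderiv g cj x * _]mulrC -mulrBr normrM.
  apply: ler_wpM2l; first exact: normr_ge0.
  apply: ltW; rewrite distrC; apply: (Hh cj).
  rewrite /M /nsq mulr_sumr; apply: ler_sum => c _.
  rewrite /sh /Pt.
  have [e|ne] := eqVneq c cj.
    rewrite e /cj enum_valK ltnn /= mulr0 mul0r addr0 mulr1.
    have : xi ^+ 2 <= (h * d (enum_val j)) ^+ 2 by exact: sq_le_abs.
    have := sqr_ge0 (h * d (enum_val j)). nra.
  rewrite /= mulr0 addr0.
  have hb : ((((enum_rank c < j)%N)%:R : R) == 0) || ((((enum_rank c < j)%N)%:R : R) == 1).
    by case: (enum_rank c < j)%N; rewrite eqxx ?orbT.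
  case/orP: hb => /eqP ->.
    rewrite mulr0 mul0r addr0 subrr expr0n /=; have := sqr_ge0 (h * d c); nra.
  rewrite mulr1; have := sqr_ge0 (h * d c); nra.
rewrite -mulr_suml -reidxN /eps'.
rewrite mulrA ltr_pdivrMr ?ltr_wpDl //.
have : 0 < eps by [].
nra.
Unshelve. all: by end_near.
Qed.

End Calc2.

Section Calc3.
Variables (R : realType) (K : nat) (nk : 'I_K -> nat).
Local Notation C := (gcoord nk).
Local Notation vec := (C -> R).

Lemma convex_ineq (g : vec -> R) (z d : vec) :
  (forall c w, has_pderiv g c w) -> (forall c, econt (pderiv g c)) ->
  (forall s1 s2 : R, s1 <= s2 ->
     \sum_c pderiv g c (fun c => z c + s1 * d c) * d c <=
     \sum_c pderiv g c (fun c => z c + s2 * d c) * d c) ->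
  \sum_c pderiv g c z * d c <= g (fun c => z c + d c) - g z.
Proof.
move=> hd hc hmon.
set phi := fun s : R => g (fun c => z c + s * d c).
set psi := fun s : R => \sum_c pderiv g c (fun c => z c + s * d c) * d c.
have hder : forall s : R, is_derive s (1:R) phi (psi s).
  move=> s.
  have key : (fun h : R => h^-1 *: ((phi \o shift s) (h *: 1) - phi s)) =
      (fun h : R => h^-1 *: (g (fun c => (z c + s * d c) + h * d c) - g (fun c => z c + s * d c))).
    apply/funext => h; rewrite /phi /=; congr (_ *: (g _ - _)).
    by apply/funext => c; rewrite /GRing.scale /=; ring.
  have hcv := @dir_deriv R K nk g (fun c => z c + s * d c) d hd hc.
  apply: DeriveDef.
    by rewrite /derivable key; apply/cvg_ex; exists (psi s).
  by rewrite /derive key; apply: cvg_lim.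
have hcont : {within `[0, 1], continuous phi}.
  apply: derivable_within_continuous => x _.
  by have [] := hder x.
have [c0 hc1 hc2] := MVT_segment ler01 (fun x _ => hder x) hcont.
have e0 : phi 0 = g z.
  by rewrite /phi; congr g; apply/funext => c; rewrite mul0r addr0.
have e1 : phi 1 = g (fun c => z c + d c).
  by rewrite /phi; congr g; apply/funext => c; rewrite mul1r.
rewrite -e0 -e1 hc2 subr0 mulr1.
have := hmon 0 c0; rewrite /psi.
have -> : (fun c1 => z c1 + 0 * d c1) = z by apply/funext => c1; rewrite mul0r addr0.
apply; move: hc1; rewrite in_itv /= => /andP [].
by [].
Qed.

End Calc3.

Section Final.
Variables (R : realType) (K : nat) (nk : 'I_K -> nat).
Local Notation C := (gcoord nk).
Local Notation vec := (C -> R).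

Lemma amgm (al u v : R) : 0 < al -> u * v <= al / 2 * u ^+ 2 + (2 * al)^-1 * v ^+ 2.
Proof.
move=> a0; rewrite -subr_ge0.
have -> : al / 2 * u ^+ 2 + (2 * al)^-1 * v ^+ 2 - u * v = (al * u - v) ^+ 2 / (2 * al).
  by field; rewrite gt_eqF.
by rewrite divr_ge0 ?sqr_ge0 // mulr_ge0 // ltW.
Qed.

Lemma sq3 (a b c : R) : (a + b - c) ^+ 2 <= 3 * a ^+ 2 + 3 * b ^+ 2 + 3 * c ^+ 2.
Proof.
rewrite -subr_ge0.
have -> : 3 * a ^+ 2 + 3 * b ^+ 2 + 3 * c ^+ 2 - (a + b - c) ^+ 2 = (a - b) ^+ 2 + (a + c) ^+ 2 + (b + c) ^+ 2 by ring.
by rewrite !addr_ge0 ?sqr_ge0.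
Qed.

Lemma final_arith (eta s u w D : R) : 0 < eta -> 0 < s ->
  eta ^+ 2 * s ^+ 2 * u <= 150 * D ^+ 2 -> w <= 69 * D ^+ 2 ->
  eta * s / 2 * u + (2 * (eta * s))^-1 * w <= 180 * D ^+ 2 / (eta * s).
Proof.
move=> e0 s0 hu hw.
have t0 : 0 < eta * s by rewrite mulr_gt0.
move: hu; have -> : eta ^+ 2 * s ^+ 2 * u = (eta * s) ^+ 2 * u by ring.
move: (eta * s) t0 => t t0 hu.
rewrite -(ler_pM2r t0).
have -> : (t / 2 * u + (2 * t)^-1 * w) * t = (t ^+ 2 * u) / 2 + w / 2.
  by field; rewrite gt_eqF.
have -> : 180 * D ^+ 2 / t * t = 180 * D ^+ 2.
  by field; rewrite gt_eqF.
move: hu; set X := t ^+ 2 * u; have := sqr_ge0 D; lra.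
Qed.

Lemma block_sum (k : 'I_K) (h : vec) :
  \sum_(c : C) (tag c == k)%:R * h c = \sum_(i : 'I_(nk k)) h (Tagged (fun k => 'I_(nk k)) i).
Proof.
have := @sig_big_dep R 0 +%R 'I_K (fun k => 'I_(nk k)) xpredT (fun _ => xpredT)
   (fun i j => (i == k)%:R * h (Tagged (fun k => 'I_(nk k)) j)).
rewrite /= => E.
have -> : \sum_(c : C) (tag c == k)%:R * h c =
  \sum_(p : {i : 'I_K & 'I_(nk i)}) (tag p == k)%:R * h (Tagged (fun k => 'I_(nk k)) (tagged p)).
  by apply: eq_bigr => -[i j] _.
rewrite -E (bigD1 k) //= [X in _ + X]big1 ?addr0.
  by apply: eq_bigr => j _; rewrite eqxx mul1r.
by move=> i /negbTE hi; apply: big1 => j _; rewrite hi mul0r.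
Qed.

End Final.

Theorem corollary6 (R : realType) (K : nat) (nk : 'I_K -> nat)
  (f : 'I_K -> (gcoord nk -> R) -> R) (ell Lam D eta : R)
  (zm1 z0 zstar : gcoord nk -> R) :
  (forall k, is_C2 (f k)) ->
  monotone_op (gameF f) ->
  0 < ell -> 0 < Lam ->
  (forall z z', enorm (fun c => gameF f z c - gameF f z' c)
                <= ell * enorm (fun c => z c - z' c)) ->
  (forall z z', specnorm (fun c d => jacF f z c d - jacF f z' c d)
                <= Lam * enorm (fun c => z c - z' c)) ->
  gameF f zstar = (fun _ => 0) ->
  enorm (fun c => zstar c - zm1 c) <= D ->
  enorm (fun c => zstar c - z0 c) <= D ->
  0 < eta ->
  eta * (150 * ell) <= 1 ->
  eta * (1711 * D * Lam) <= 1 ->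
  forall T : nat, (1 <= T)%N ->
    gap f z0 (3 * D) (ogd (gameF f) eta zm1 z0 T)
      <= 180 * K%:R * D ^+ 2 / (eta * Num.sqrt T%:R).
Proof.
move=> hC2 hmono hell _ hlip _ hzs hD1 hD0 heta h150 _ T hT.
set F := gameF f.
have lip' : forall z z', nsq (fun c => F z c - F z' c) <= ell ^+ 2 * nsq (fun c => z c - z' c).
  by move=> z z'; apply: enorm_le_sq; [exact: ltW| exact: hlip].
have Fzs : forall c, F zstar c = 0 by move=> c; rewrite /F hzs.
have small : eta * ell <= 1/150.
  have e : eta * (150 * ell) = 150 * (eta * ell) by ring.
  by move: h150; rewrite e; lra.
have D0 : 0 <= D by apply: le_trans hD0; exact: sqrtr_ge0.
have hD1' := enorm_le_sq1 D0 hD1.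
have hD0' := enorm_le_sq1 D0 hD0.
case: T hT => [//|m] _.
have hF := OG_F hmono lip' Fzs heta hell small hD1' hD0' m.
have hz := OG_z hmono lip' Fzs heta hell small hD1' hD0' m.
rewrite /G /= in hF hz.
set z := ogd F eta zm1 z0 m.+1.
rewrite -/z in hF hz.
set s := Num.sqrt (m.+1)%:R.
have s0 : 0 < s by rewrite sqrtr_gt0 ltr0n.
have s2 : s ^+ 2 = (m.+1)%:R by rewrite sqr_sqrtr // ler0n.
set B := 180 * D ^+ 2 / (eta * s).
have -> : 180 * K%:R * D ^+ 2 / (eta * s) = \sum_(k < K) B.
  by rewrite sumr_const card_ord -mulr_natl /B; ring.
rewrite /gap; apply: ler_sum => k _.
rewrite lerBlDr addrC -lerBlDr.
have [hpd hec _ _] := hC2 k.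
apply: lb_le_inf.
  exists (f k (fun c => if tag c == k then z0 c else z c)).
  exists (fun c => if tag c == k then z0 c else z c) => //.
  split.
    by move=> c /negbTE ->.
  rewrite /enorm /blk /= eqxx.
  have -> : \sum_(c : 'I_(nk k)) (z0 (Tagged (fun k => 'I_(nk k)) c) - z0 (Tagged (fun k => 'I_(nk k)) c)) ^+ 2 = 0.
    by apply: big1 => i _; rewrite subrr expr0n.
  by rewrite sqrtr0 mulr_ge0.
move=> y [z' [hz'1 hz'2] <-].
set d := fun c => z' c - z c.
have hzd : (fun c => z c + d c) = z' by apply/funext => c; rewrite /d; ring.
have psiE : forall w : gcoord nk -> R, \sum_c pderiv (f k) c w * d c = \sum_c F w c * d c.
  move=> w; apply: eq_bigr => c _.
  have [e|ne] := eqVneq (tag c) k.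
    by rewrite /F /gameF e.
  by rewrite /d (hz'1 c ne) subrr !mulr0.
have hcv := @convex_ineq R K nk (f k) z d hpd hec.
have : \sum_c pderiv (f k) c z * d c <= f k z' - f k z.
  rewrite -hzd; apply: hcv => r1 r2 hs.
  rewrite !psiE.
  set w1 := fun c => z c + r1 * d c; set w2 := fun c => z c + r2 * d c.
  have hm := hmono w1 w2.
  have E : \sum_c (F w2 c - F w1 c) * (w2 c - w1 c) = (r2 - r1) * (\sum_c F w2 c * d c - \sum_c F w1 c * d c).
    rewrite -sumrB mulr_sumr; apply: eq_bigr => c _; rewrite /w1 /w2; ring.
  rewrite E in hm.
  have [e|ne] := eqVneq r1 r2; first by rewrite /w1 /w2 e lexx.
  have hpos : 0 < r2 - r1 by rewrite subr_gt0 lt_neqAle ne hs.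
  by move: hm; rewrite pmulr_rge0 // subr_ge0.
rewrite psiE => hconv.
have hbound : - \sum_c F z c * d c <= eta * s / 2 * nsq (F z) + (2 * (eta * s))^-1 * nsq (fun c => z c - z' c).
  rewrite -sumrN /nsq !mulr_sumr -big_split; apply: ler_sum => c _.
  have -> : - (F z c * d c) = F z c * (z c - z' c) by rewrite /d; ring.
  by apply: amgm; rewrite mulr_gt0.
have hw : nsq (fun c => z c - z' c) <= 69 * D ^+ 2.
  have h1 : nsq (fun c => z c - z' c) <= 3 * nsq (fun c => z c - zstar c) + 3 * nsq (fun c => zstar c - z0 c)
             + 3 * \sum_c (tag c == k)%:R * (z' c - z0 c) ^+ 2.
    apply: sum_le3 => c.
    have [e|ne] := eqVneq (tag c) k.
      rewrite /= mul1r.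
      have -> : z c - z' c = (z c - zstar c) + (zstar c - z0 c) - (z' c - z0 c) by ring.
      exact: sq3.
    rewrite (hz'1 c ne) subrr expr0n /= mul0r mulr0 addr0.
    by rewrite addr_ge0 // mulr_ge0 // sqr_ge0.
  have h2 : \sum_c (tag c == k)%:R * (z' c - z0 c) ^+ 2 <= 9 * D ^+ 2.
    rewrite block_sum.
    have D3 : 0 <= 3 * D by rewrite mulr_ge0.
    have := enorm_le_sq1 D3 hz'2; rewrite /nsq /blk => h.
    apply: le_trans h _; rewrite le_eqVlt; apply/orP; left; apply/eqP; ring.
  move: h1 h2 hz hD0'; set X := \sum_c _; lra.
have hu : eta ^+ 2 * s ^+ 2 * nsq (F z) <= 150 * D ^+ 2 by rewrite s2.
have := final_arith heta s0 hu hw.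
rewrite -/B; lra.
Qed.
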